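(* Let $\alpha\in\Phi_+$. Then: (a) the set $\Phi_+\setminus\operatorname{leg}(h_\alpha)$ is closed; (b) $V_\alpha:=\prod_{\gamma\in\Phi_+\setminus\operatorname{leg}(h_\alpha)}X_\gamma$ is a subgroup of $U$; (c) $X_\alpha\cap[V_\alpha,V_\alpha]=\{1\}$; (d) for each $s\in\mathbb{F}_q^\times$ there is a linear character $\lambda_{\alpha,s}$ of $V_\alpha$ with $\lambda_{\alpha,s}|_{X_\alpha}=\varphi_{\alpha,s}$ and $X_\gamma\subseteq\ker(\lambda_{\alpha,s})$ for every $\gamma\in\Phi_+$ with $\operatorname{ht}(\gamma)>\operatorname{ht}(\alpha)$.
   Context: $q$ is a power of a prime $p$. $\Phi$ is a root system of type $D_4$ with simple roots $\alpha_1,\alpha_2,\alpha_3,\alpha_4$ ($\alpha_3$ central node), positive roots $\Phi_+=\{\alpha_1,\dots,\alpha_{12}\}$ with $\alpha_5=\alpha_1+\alpha_3$, $\alpha_6=\alpha_2+\alpha_3$, $\alpha_7=\alpha_3+\alpha_4$, $\alpha_8=\alpha_1+\alpha_2+\alpha_3$, $\alpha_9=\alpha_1+\alpha_3+\alpha_4$, $\alpha_{10}=\alpha_2+\alpha_3+\alpha_4$, $\alpha_{11}=\alpha_1+\alpha_2+\alpha_3+\alpha_4$, $\alpha_{12}=\alpha_1+\alpha_2+2\alpha_3+\alpha_4$; $\operatorname{ht}$ is the height (sum of coefficients in the simple roots). A nonempty $S\subseteq\Phi$ is closed if for all $\alpha,\beta\in S$, either $\alpha+\beta\in S$ or $\alpha+\beta\notin\Phi$.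 $U=U(q)$ is the Sylow $p$-subgroup of the Chevalley group $D_4(q)$ generated by $x_i(t)$ ($i=1,\dots,12$, $t\in\mathbb{F}_q$), with $x_i(t)x_i(u)=x_i(t+u)$, each element uniquely $x_1(d_1)\cdots x_{12}(d_{12})$, and commutators ($[a,b]=a^{-1}b^{-1}ab$): $[x_1(t),x_3(u)]=x_5(tu)$, $[x_1(t),x_6(u)]=x_8(-tu)$, $[x_1(t),x_7(u)]=x_9(tu)$, $[x_1(t),x_{10}(u)]=x_{11}(-tu)$, $[x_2(t),x_3(u)]=x_6(tu)$, $[x_2(t),x_5(u)]=x_8(-tu)$, $[x_2(t),x_7(u)]=x_{10}(tu)$, $[x_2(t),x_9(u)]=x_{11}(-tu)$, $[x_3(t),x_4(u)]=x_7(tu)$, $[x_3(t),x_{11}(u)]=x_{12}(-tu)$, $[x_4(t),x_5(u)]=x_9(-tu)$, $[x_4(t),x_6(u)]=x_{10}(-tu)$, $[x_4(t),x_8(u)]=x_{11}(-tu)$, $[x_5(t),x_{10}(u)]=x_{12}(-tu)$, $[x_6(t),x_9(u)]=x_{12}(-tu)$, $[x_7(t),x_8(u)]=x_{12}(tu)$, others trivial. $X_{\alpha_i}=\{x_i(t)\}$. Fix a nontrivial linear character $\phi$ of $(\mathbb{F}_q,+)$ and define $\varphi_{\alpha_i,s}:X_{\alpha_i}\to\mathbb{C}^\times$, $x_i(d)\mapsto\phi(sd)$. Hooks: $h_\alpha=\{\gamma\in\Phi_+ : \exists\,\gamma'\in\Phi_+\cup\{0\},\ \gamma+\gamma'=\alpha\}$.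 Arm: $\operatorname{arm}(h_\alpha)=(h_\alpha\cap h_{\alpha_{12}})\setminus\{\alpha\}$ if $\alpha\ne\alpha_{12}$, and $\operatorname{arm}(h_{\alpha_{12}})=\{\alpha_8,\alpha_9,\alpha_{10},\alpha_{11}\}$. Leg: $\operatorname{leg}(h_\alpha)=h_\alpha\setminus(\operatorname{arm}(h_\alpha)\cup\{\alpha\})$. Products of root subgroups over a set of roots are taken in any fixed order. *)

(* Defs.v *)
From HB Require Import structures.
From mathcomp Require Import all_boot all_order all_algebra all_fingroup all_field.
Set Implicit Arguments. Unset Strict Implicit. Unset Printing Implicit Defensive.
Import GRing.Theory Num.Theory.

(* Convention: the index i : 'I_12 (0-based) stands for the root alpha_(i+1). *)

(* Coefficients of the positive roots of D4 in the simple roots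
   alpha_1, alpha_2, alpha_3 (central node), alpha_4. *)
Definition posroots : seq (seq int) :=
  [:: [:: 1; 0; 0; 0]%Z; [:: 0; 1; 0; 0]%Z; [:: 0; 0; 1; 0]%Z; [:: 0; 0; 0; 1]%Z;
      [:: 1; 0; 1; 0]%Z; [:: 0; 1; 1; 0]%Z; [:: 0; 0; 1; 1]%Z; [:: 1; 1; 1; 0]%Z;
      [:: 1; 0; 1; 1]%Z; [:: 0; 1; 1; 1]%Z; [:: 1; 1; 1; 1]%Z; [:: 1; 1; 2; 1]%Z].

Definition roots : seq (seq int) := posroots ++ map (map (fun z => - z)%R) posroots.

Definition rt (i : 'I_12) : seq int := nth [::] posroots i.

Definition vadd (a b : seq int) : seq int := map (fun p => (p.1 + p.2)%R) (zip a b).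

Definition ht (i : 'I_12) : int := foldr (fun z acc => (z + acc)%R) 0%R (rt i).

Definition closed_set (S : {set 'I_12}) : Prop :=
  S != set0 /\
  forall a b, a \in S -> b \in S ->
    (vadd (rt a) (rt b) \in [seq rt i | i in S]) \/ (vadd (rt a) (rt b) \notin roots).

(* hook h_alpha = {gamma in Phi_+ | exists gamma' in Phi_+ u {0}, gamma + gamma' = alpha} *)
Definition hook (a : 'I_12) : {set 'I_12} :=
  [set g : 'I_12 | (rt g == rt a) || [exists g' : 'I_12, vadd (rt g) (rt g') == rt a]].

Definition top_root : 'I_12 := inord 11.

Definition arm (a : 'I_12) : {set 'I_12} :=
  if a != top_root then (hook a :&: hook top_root) :\ a
  else [set (inord 7 : 'I_12); inord 8; inord 9; inord 10].

Definition leg (a : 'I_12) : {set 'I_12} := hook a :\: (arm a :|: [set a]).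

(* Commutator table, 1-based as in the paper: for i < j,
   [x_i(t), x_j(u)] = x_k(c t u) when comm_tab i j = Some (k, c), trivial otherwise. *)
Definition comm_tab (i j : nat) : option (nat * int) :=
  match i, j with
  | 1, 3 => Some (5, 1%Z)   | 1, 6 => Some (8, (-1)%Z) | 1, 7 => Some (9, 1%Z)
  | 1, 10 => Some (11, (-1)%Z)
  | 2, 3 => Some (6, 1%Z)   | 2, 5 => Some (8, (-1)%Z) | 2, 7 => Some (10, 1%Z)
  | 2, 9 => Some (11, (-1)%Z)
  | 3, 4 => Some (7, 1%Z)   | 3, 11 => Some (12, (-1)%Z)
  | 4, 5 => Some (9, (-1)%Z) | 4, 6 => Some (10, (-1)%Z) | 4, 8 => Some (11, (-1)%Z)
  | 5, 10 => Some (12, (-1)%Z) | 6, 9 => Some (12, (-1)%Z) | 7, 8 => Some (12, 1%Z)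
  | _, _ => None
  end.

Definition prodx (gT : finGroupType) (F : finFieldType) (x : 'I_12 -> F -> gT)
  (d : {ffun 'I_12 -> F}) : gT := (\prod_(i < 12) x i (d i))%g.

(* Hypotheses: x realises the Sylow p-subgroup U of D4(q) with the paper's relations. *)
Definition D4_unipotent (gT : finGroupType) (F : finFieldType)
  (U : {group gT}) (x : 'I_12 -> F -> gT) : Prop :=
  [/\ forall i t u, x i (t + u)%R = (x i t * x i u)%g,
      forall g, g \in U <-> exists d, g = prodx x d,
      injective (prodx x)
    & forall (i j : 'I_12) t u, i < j ->
        ([~ x i t, x j u])%g =
        match comm_tab i.+1 j.+1 with
        | Some (k, c) => x (inord k.-1) (c%:~R * t * u)%R
        | None => 1%g
        end].

Definition Xroot (gT : finGroupType) (F : finFieldType) (x : 'I_12 -> F -> gT)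
  (a : 'I_12) : {set gT} := [set x a t | t : F].

Definition Vset (gT : finGroupType) (F : finFieldType) (x : 'I_12 -> F -> gT)
  (a : 'I_12) : {set gT} :=
  [set prodx x d | d in [set d : {ffun 'I_12 -> F} | [forall i in leg a, d i == 0%R]]].

(* Main.v *)
Require Import Defs.
From HB Require Import structures.
From mathcomp Require Import all_boot all_order all_algebra all_fingroup all_field.
Import GRing.Theory Num.Theory.
Set Implicit Arguments. Unset Strict Implicit. Unset Printing Implicit Defensive.

Section Gen.
Variables (F : finFieldType) (gT : finGroupType) (x : 'I_12 -> F -> gT).
Hypothesis xadd : forall i t u, x i (t + u)%R = (x i t * x i u)%g.
Hypothesis xcomm : forall (i j : 'I_12) t u, i < j ->
        ([~ x i t, x j u])%g =
        match comm_tab i.+1 j.+1 with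
        | Some (k, c) => x (inord k.-1) (c%:~R * t * u)%R
        | None => 1%g
        end.
Local Open Scope group_scope.

Lemma x0 i : x i 0%R = 1.
Proof. by apply: (mulgI (x i 0%R)); rewrite -xadd addr0 mulg1. Qed.
Lemma xN i t : x i (- t)%R = (x i t)^-1.
Proof. by apply: (mulgI (x i t)); rewrite -xadd addrN x0 mulgV. Qed.
Lemma xC i t u : commute (x i t) (x i u).
Proof. by rewrite /commute -!xadd addrC. Qed.

Definition y (i : nat) (t : F) : gT := x (inord i) t.
Lemma y0 i : y i 0%R = 1. Proof. exact: x0. Qed.

Lemma yconj i j t u : i < 12 -> j < 12 -> i != j ->
  match comm_tab (minn i j).+1 (maxn i j).+1 with
  | Some (k, _) => exists v, y j u ^ y i t = y j u * y k.-1 v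
  | None => y j u ^ y i t = y j u end.
Proof.
move=> Hi Hj Hij.
have E : y j u ^ y i t = y j u * [~ y j u, y i t] by rewrite commgEl mulVKg.
rewrite E; case: (ltngtP i j) => [ij|ji|ij]; last by rewrite ij eqxx in Hij.
- rewrite -invgR.
  have H := @xcomm (inord i) (inord j) t u; rewrite !inordK // in H.
  rewrite /y (H ij); case: (comm_tab i.+1 j.+1) => [[k c]|].
    by exists (-(c%:~R * t * u))%R; rewrite xN.
  by rewrite invg1 mulg1.
- idtac.
  have H := @xcomm (inord j) (inord i) u t; rewrite !inordK // in H.
  rewrite /y (H ji); case: (comm_tab j.+1 i.+1) => [[k c]|].
    by exists (c%:~R * u * t)%R.
  by rewrite mulg1.
Qed.

Definition condSR (S R : nat -> bool) := forall i j, i < 12 -> j < 12 -> R i -> S j -> i != j ->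
  match comm_tab (minn i j).+1 (maxn i j).+1 with
  | Some (k, _) => [&& S k.-1, maxn i j < k.-1 & k.-1 < 12]
  | None => true end.

Definition Xn i : {set gT} := [set y i t | t : F].
Lemma Xn_group i : group_set (Xn i).
Proof.
apply/group_setP; split; first by apply/imsetP; exists 0%R; rewrite ?y0.
move=> a b /imsetP [t _ ->] /imsetP [u _ ->]; apply/imsetP; exists (t + u)%R => //.
by rewrite /y xadd.
Qed.
Definition Xp (S : nat -> bool) i : {set gT} := if S i then Xn i else 1.
Lemma Xp_group S i : group_set (Xp S i).
Proof. by rewrite /Xp; case: (S i); [exact: Xn_group | exact: group_set_one]. Qed.

Fixpoint Tk (S : nat -> bool) k : {set gT} :=
  if k is k'.+1 then Xp S (12 - k) * Tk S k' else 1.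

Lemma Em k : k < 12 -> 12 - k = (12 - k.+1).+1.
Proof. by move=> Hk; rewrite subSS subSn. Qed.

Lemma Tk_props S R : condSR S R -> (forall i, i < 12 -> S i -> R i) -> forall k, k <= 12 ->
 [/\ group_set (Tk S k),
     (forall j u, 12 - k <= j -> j < 12 -> S j -> y j u \in Tk S k)
   & (forall i t, i < 12 -> R i -> Tk S k :^ y i t \subset Tk S k)].
Proof.
move=> cSR SR; elim=> [_|k IH Hk].
  split => /=.
  - exact: group_set_one.
  - by move=> j u H1 H2; rewrite subn0 in H1; move: (leq_trans H2 H1); rewrite ltnn.
  - by move=> i t _ _; rewrite conjs1g.
have [gT' memT' nT'] := IH (ltnW Hk).
rewrite (Em Hk) in memT'.
set m := 12 - k.+1 in memT' *.
have Hm : m < 12 by rewrite /m subSS; apply: (leq_ltn_trans (leq_subr k 11)).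
change (Tk S k.+1) with (Xp S m * Tk S k).
pose GT := group gT'.
have gX := Xp_group S m. pose GX := group gX.
have Nconj : forall i t, i < 12 -> R i -> Xp S m :^ y i t \subset Xp S m * Tk S k.
  move=> i t Hi Ri; rewrite /Xp; case Sm: (S m); last first.
    by rewrite conjs1g mulg_subl // (group1 GT).
  apply/subsetP => z /imsetP [w /imsetP [u _ ->] ->].
  case: (eqVneq i m) => [->|ne].
    rewrite conjgE -(xC (inord m)) /y mulKg.
    by apply: (subsetP (mulg_subl _ (group1 GT))); apply/imsetP; exists u.
  have := yconj t u Hi Hm ne; have := cSR i m Hi Hm Ri Sm ne.
  case: (comm_tab _ _) => [[k' c]|] => [/and3P[Sk lt1 lt2] [v ->] | _ ->].
    apply: mem_mulg; first by apply/imsetP; exists u.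
    apply: memT' => //; exact: leq_ltn_trans (leq_maxr i m) lt1.
  by apply: (subsetP (mulg_subl _ (group1 GT))); apply/imsetP; exists u.
split.
- change (group_set (GX * GT)); apply/comm_group_setP; apply: normC.
  apply/subsetP => g Hg; rewrite inE.
  move: Hg; rewrite /= /Xp; case Sm: (S m).
    by move=> /imsetP [u _ ->]; apply: nT' => //; apply: SR.
  by rewrite set1gE => /set1P ->; rewrite conjsg1.
- move=> j u H1 H2 Sj; case: (eqVneq j m) => [E|ne].
    rewrite -[y j u]mulg1; apply: mem_mulg; last exact: (group1 GT).
    by rewrite /Xp -E Sj; apply/imsetP; exists u.
  rewrite -[y j u]mul1g; apply: mem_mulg; first exact: (group1 GX).
  by apply: memT' => //; rewrite ltn_neqAle eq_sym ne.
- move=> i t Hi Ri; rewrite conjsMg.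
  apply: subset_trans (mulgSS (Nconj i t Hi Ri) (nT' i t Hi Ri)) _.
  by rewrite -mulgA (mulGid GT).
Qed.


Lemma Tk_mem S k g : k <= 12 ->
  g \in Tk S k <-> exists f : nat -> F, (forall i, ~~ S i -> f i = 0%R) /\
                     g = \prod_(12 - k <= i < 12) y i (f i).
Proof.
elim: k g => [|k IH] g Hk.
  rewrite subn0 /= set1gE; split => [/set1P ->|[f [_ ->]]].
    by exists (fun _ => 0%R); rewrite big_geq.
  by rewrite big_geq // set11.
have Hk' : k <= 12 := ltnW Hk.
have E := Em Hk.
set m := 12 - k.+1 in E *.
have Hm : m < 12 by rewrite /m subSS; apply: (leq_ltn_trans (leq_subr k 11)).
change (g \in Xp S m * Tk S k) with (g \in Tk S k.+1).
split.
- case/mulsgP => a b Ha Hb ->.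
  have [f [Hf ->]] := (IH b Hk').1 Hb.
  have [t [Ht ->]] : exists t, (~~ S m -> t = 0%R) /\ a = y m t.
    move: Ha; rewrite /Xp; case: (S m) => [/imsetP [t _ ->]|]; first by exists t.
    by rewrite set1gE => /set1P ->; exists 0%R; rewrite y0.
  exists (fun i => if i == m then t else f i); split.
    by move=> i Si; case: eqP => [E'|_]; [apply: Ht; rewrite -E' | exact: Hf].
  rewrite (big_ltn Hm) eqxx E; congr (_ * _); apply: eq_big_nat => i /andP [Hi _].
  by rewrite gtn_eqF.
- move=> [f [Hf ->]]; rewrite (big_ltn Hm); apply: mem_mulg.
    rewrite /Xp; case Sm: (S m); first by apply/imsetP; exists (f m).
    by rewrite Hf ?Sm // y0 set1gE set11.
  by apply/(IH _ Hk'); exists f; split => //; rewrite E.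
Qed.

Lemma prodxE (d : {ffun 'I_12 -> F}) (f : nat -> F) : (forall i : 'I_12, d i = f i) ->
  prodx x d = \prod_(0 <= i < 12) y i (f i).
Proof. by move=> Hd; rewrite /prodx big_mkord; apply: eq_bigr => i _; rewrite /y inord_val Hd. Qed.

Lemma Tk_prodx S g : g \in Tk S 12 <->
  exists d : {ffun 'I_12 -> F}, (forall i : 'I_12, ~~ S i -> d i = 0%R) /\ g = prodx x d.
Proof.
split.
  move/(@Tk_mem S 12 _ (leqnn 12)); rewrite subnn => -[f [Hf ->]]; exists [ffun i : 'I_12 => f i]; split.
    by move=> i Si; rewrite ffunE Hf.
  by rewrite (@prodxE _ f) // => i; rewrite ffunE.
move=> [d [Hd ->]]; apply/(@Tk_mem S 12 _ (leqnn 12)); rewrite subnn; exists (fun i => if i < 12 then d (inord i) else 0%R); split.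
  move=> i Si; case: ifP => // Hi; apply: Hd; by rewrite inordK.
by apply: prodxE => i; rewrite ltn_ord inord_val.
Qed.

Lemma prod_split (f : nat -> gT) n : n < 12 ->
  \prod_(0 <= i < 12) f i = \prod_(0 <= i < n) f i * f n * \prod_(n.+1 <= i < 12) f i.
Proof. by move=> Hn; rewrite (big_cat_nat (leq0n n) (ltnW Hn)) /= (big_ltn Hn) mulgA. Qed.


Lemma x_delta (j : 'I_12) v : x j v = prodx x [ffun i => if i == j then v else 0%R].
Proof.
rewrite (@prodxE _ (fun i => if i == j :> nat then v else 0%R)); last first.
  by move=> i; rewrite ffunE.
rewrite (prod_split _ (ltn_ord j)) eqxx.
rewrite big1_seq; last first.
  move=> i /andP [_]; rewrite mem_index_iota => /andP [_ Hi].
  by rewrite ltn_eqF // y0.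
rewrite [X in _ * X]big1_seq; last first.
  move=> i /andP [_]; rewrite mem_index_iota => /andP [Hi _].
  by rewrite gtn_eqF // y0.
by rewrite mul1g mulg1 /y inord_val.
Qed.

Section Coord.
Hypothesis inj : injective (prodx x).
Variables (a : 'I_12) (Sl Sa : nat -> bool).
Hypothesis cSl : condSR Sl Sl.
Hypothesis cSa : condSR Sa Sl.
Hypothesis Sla : Sl a.
Hypothesis SaE : forall i, Sa i = Sl i && (i != a).

Let SaSl i : i < 12 -> Sa i -> Sl i.
Proof. by move=> _; rewrite SaE => /andP[]. Qed.

Let gV : group_set (Tk Sl 12).
Proof. by case: (Tk_props cSl (fun i _ H => H) (leqnn 12)). Qed.
Let GV := group gV.
Let gY : group_set (Tk Sa 12).
Proof. by case: (Tk_props cSa SaSl (leqnn 12)). Qed.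
Let GY := group gY.
Let memY j u : j < 12 -> Sa j -> y j u \in Tk Sa 12.
Proof. by move=> Hj Sj; case: (Tk_props cSa SaSl (leqnn 12)) => _ H _; apply: H; rewrite ?subnn. Qed.
Let nY i t : i < 12 -> Sl i -> Tk Sa 12 :^ y i t \subset Tk Sa 12.
Proof. by move=> Hi Si; case: (Tk_props cSa SaSl (leqnn 12)) => _ _ H; apply: H. Qed.

Lemma Yzero v : y a v \in Tk Sa 12 -> v = 0%R.
Proof.
case/Tk_prodx => d [Hd E].
move: E; rewrite /y inord_val x_delta => /inj Ed.
have := congr1 (fun f : {ffun 'I_12 -> F} => f a) Ed.
rewrite /= ffunE eqxx => ->; apply: Hd.
by rewrite SaE eqxx andbF.
Qed.

Definition Pc g t := (y a t)^-1 * g \in Tk Sa 12.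

Lemma P_prodx (d : {ffun 'I_12 -> F}) : (forall i : 'I_12, ~~ Sl i -> d i = 0%R) ->
  Pc (prodx x d) (d a).
Proof.
move=> Hd.
set f := fun i => if i < 12 then d (inord i) else 0%R.
rewrite (@prodxE d f); last by move=> i; rewrite /f ltn_ord inord_val.
rewrite (prod_split _ (ltn_ord a)).
have -> : f a = d a by rewrite /f ltn_ord inord_val.
have fy : forall i, i < 12 -> i != a -> y i (f i) \in Tk Sa 12.
  move=> i Hi ne; case Si: (Sl i).
    by apply: memY => //; rewrite SaE Si ne.
  rewrite /f Hi Hd ?inordK ?Si // y0; exact: (group1 GY).
set A := \prod_(0 <= i < a) _.
set B := \prod_(a.+1 <= i < 12) _.
have HA : A \in Tk Sa 12.
  rewrite /A big_seq; apply: (@group_prod _ GY) => i; rewrite mem_index_iota => /andP[_ Hi].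
  by apply: fy; [exact: ltn_trans Hi (ltn_ord a) | rewrite ltn_eqF].
have HB : B \in Tk Sa 12.
  rewrite /B big_seq; apply: (@group_prod _ GY) => i; rewrite mem_index_iota => /andP[Hi Hi'].
  by apply: fy; [exact: Hi' | rewrite gtn_eqF].
rewrite /Pc; have -> : (y a (d a))^-1 * (A * y a (d a) * B) = A ^ y a (d a) * B.
  by rewrite conjgE !mulgA.
apply: (groupM (G := GY)) HB.
by apply: (subsetP (nY (d a) (ltn_ord a) Sla)); rewrite memJ_conjg.
Qed.

Lemma P_unique g t t' : Pc g t -> Pc g t' -> t = t'.
Proof.
move=> H1 H2.
have : (y a t)^-1 * g * ((y a t')^-1 * g)^-1 \in Tk Sa 12.
  by apply: (groupM (G := GY)) => //; apply: (@groupVr _ GY).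
rewrite invMg invgK !mulgA mulgK /y -xN -xadd => /Yzero.
by rewrite addrC => /subr0_eq.
Qed.

Lemma P_mul g h t u : Pc g t -> Pc h u -> Pc (g * h) (t + u)%R.
Proof.
move=> H1 H2; rewrite /Pc.
have -> : (y a (t + u)%R)^-1 * (g * h) = ((y a t)^-1 * g) ^ (y a u) * ((y a u)^-1 * h).
  by rewrite /y xadd invMg conjgE !mulgA mulgK.
apply: (groupM (G := GY)) H2.
by apply: (subsetP (nY u (ltn_ord a) Sla)); rewrite memJ_conjg.
Qed.

Definition coord g := if [pick d | prodx x d == g] is Some d then d a else 0%R.

Lemma coord_prodx d : coord (prodx x d) = d a.
Proof.
rewrite /coord; case: pickP => [d' /eqP /inj -> //|/(_ d)].
by rewrite eqxx.
Qed.

Lemma coordP g : g \in Tk Sl 12 -> Pc g (coord g).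
Proof.
case/Tk_prodx => d [Hd ->]; rewrite coord_prodx; exact: P_prodx.
Qed.

Lemma coord_mul g h : g \in Tk Sl 12 -> h \in Tk Sl 12 ->
  coord (g * h) = (coord g + coord h)%R.
Proof.
move=> Hg Hh; apply: P_unique (coordP _) (P_mul (coordP Hg) (coordP Hh)).
exact: (groupM (G := GV)).
Qed.

Lemma coord1 : coord 1 = 0%R.
Proof.
have H := coord_mul (group1 GV) (group1 GV); rewrite mulg1 in H.
have := congr1 (fun z => (z - coord 1%g)%R) H; rewrite /= subrr addrK => <-. done.
Qed.

Lemma coordV g : g \in Tk Sl 12 -> coord g^-1 = (- coord g)%R.
Proof.
move=> Hg; have H := coord_mul (groupVr (G := GV) Hg) Hg.
rewrite mulVg coord1 in H; apply/eqP; rewrite -addr_eq0; exact/eqP.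
Qed.

Lemma comm_in_Y g h : g \in Tk Sl 12 -> h \in Tk Sl 12 -> [~ g, h] \in Tk Sa 12.
Proof.
move=> Hg Hh.
have Vg' := groupVr (G := GV) Hg. have Vh' := groupVr (G := GV) Hh.
have Vgh := groupM (G := GV) Hg Hh. have V2 := groupM (G := GV) Vh' Vgh.
have Hc : coord [~ g, h] = 0%R.
  rewrite commgEl conjgE (coord_mul Vg' V2) (coord_mul Vh' Vgh) (coord_mul Hg Hh) !coordV //.
  by rewrite addrCA addKr addNr.
have Vc : [~ g, h] \in Tk Sl 12.
  by rewrite commgEl conjgE; apply: (groupM (G := GV)).
have := coordP Vc; by rewrite /Pc Hc y0 invg1 mul1g.
Qed.

Lemma comm_sub_Y : [~: Tk Sl 12, Tk Sl 12] \subset Tk Sa 12.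
Proof.
rewrite /commutator (gen_subG _ GY); apply/subsetP => z /imset2P [g h Hg Hh ->].
exact: comm_in_Y.
Qed.

End Coord.

End Gen.
Definition rtn (i : nat) := nth [::] posroots i.
Definition hookn a g := (rtn g == rtn a) || has (fun j => vadd (rtn g) (rtn j) == rtn a) (iota 0 12).
Definition armn a g := if a != 11 then [&& hookn a g, hookn 11 g & g != a] else g \in [:: 7;8;9;10].
Definition legn a g := [&& hookn a g, ~~ armn a g & g != a].

Lemma exists12 (P : nat -> bool) : [exists j : 'I_12, P j] = has P (iota 0 12).
Proof.
apply/existsP/hasP => [[j Hj]|[j Hj HP]].
  by exists (val j); rewrite // mem_iota ltn_ord.
by move: Hj; rewrite mem_iota => /andP [_ Hj]; exists (Ordinal Hj).
Qed.

Lemma hookE (a g : 'I_12) : (g \in hook a) = hookn a g.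
Proof. by rewrite inE (exists12 (fun j => vadd (rtn g) (rtn j) == rtn a)). Qed.

Lemma legE (a g : 'I_12) : (g \in leg a) = legn a g.
Proof.
rewrite /leg in_setD in_setU in_set1 hookE /arm /legn /armn.
have -> : (a != top_root) = (val a != 11).
  by rewrite /top_root -(inj_eq val_inj) /= inordK.
case: ifP => Ha.
  rewrite in_setD1 in_setI !hookE /top_root inordK // -(inj_eq val_inj) /=.
  by case: (hookn a g); case: (hookn 11 g); case: (val g == val a).
rewrite !inE -!(inj_eq val_inj) /= !inordK //.
case: (hookn a g); case: (g == a :> nat); case: (g == 7 :> nat); case: (g == 8 :> nat); case: (g == 9 :> nat); by case: (g == 10 :> nat).
Qed.

Definition Slg a i := (i < 12) && ~~ legn a i.
Definition Sal a i := Slg a i && (i != a).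
Definition condb (S R : nat -> bool) := all (fun i => all (fun j =>
  R i ==> S j ==> (i != j) ==>
  match comm_tab (minn i j).+1 (maxn i j).+1 with
  | Some (k, _) => [&& S k.-1, maxn i j < k.-1 & k.-1 < 12]
  | None => true end) (iota 0 12)) (iota 0 12).
Definition closedn a := all (fun b => all (fun c => (~~ legn a b) ==> (~~ legn a c) ==>
  ((vadd (rtn b) (rtn c) \notin Defs.roots) ||
   has (fun i => (~~ legn a i) && (rtn i == vadd (rtn b) (rtn c))) (iota 0 12))) (iota 0 12)) (iota 0 12).
Definition htn i : int := foldr (fun z acc => (z + acc)%R) 0%R (rtn i).
Definition allchecks a := [&& closedn a, condb (Slg a) (Slg a), condb (Sal a) (Slg a) &
  all (fun g => (htn a < htn g)%R ==> ~~ legn a g) (iota 0 12)].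
Lemma checks : all allchecks (iota 0 12).
Proof. vm_compute. reflexivity. Qed.

Lemma allchecksP (a : 'I_12) : allchecks a.
Proof. by apply: (allP checks); rewrite mem_iota ltn_ord. Qed.

Lemma condbP S R : condb S R -> condSR S R.
Proof.
move=> H i j Hi Hj Ri Sj ne.
move: (allP H i); rewrite mem_iota Hi => /(_ isT) /allP /(_ j).
by rewrite mem_iota Hj => /(_ isT); rewrite Ri Sj ne.
Qed.

Lemma closedP (a : 'I_12) : closedn a -> closed_set (~: leg a).
Proof.
move=> H; split.
  by apply/set0Pn; exists a; rewrite inE legE /legn eqxx !andbF.
move=> b c; rewrite !in_setC !legE => Hb Hc.
move: (allP H b); rewrite mem_iota ltn_ord => /(_ isT) /allP /(_ c).
rewrite mem_iota ltn_ord => /(_ isT).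
rewrite Hb Hc !implyTb => /orP [Hr|/hasP [i Hi /andP [Hl /eqP Ei]]]; [by right|left].
move: Hi; rewrite mem_iota => /andP [_ Hi].
have -> : vadd (rt b) (rt c) = rt (Ordinal Hi) by rewrite -Ei.
by apply: image_f; rewrite in_setC legE.
Qed.

Unset Implicit Arguments.

Theorem lemma3p1 (F : finFieldType) (gT : finGroupType) (U : {group gT})
  (x : 'I_12 -> F -> gT) (phi : F -> algC)
  (HU : D4_unipotent U x)
  (phi_add : forall a b, phi (a + b)%R = (phi a * phi b)%R)
  (phi_nz : forall a, phi a != 0%R)
  (phi_nontriv : exists a, phi a != 1%R)
  (a : 'I_12) :
  [/\ closed_set (~: leg a),
      (Vset x a \subset U) && group_set (Vset x a),
      (Xroot x a :&: [~: Vset x a, Vset x a])%g = 1%g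
    & forall s : F, s != 0%R ->
        exists lam : gT -> algC,
          [/\ forall g h, g \in Vset x a -> h \in Vset x a ->
                lam (g * h)%g = (lam g * lam h)%R,
              forall g, g \in Vset x a -> lam g != 0%R,
              forall t : F, lam (x a t) = phi (s * t)%R
            & forall (g : 'I_12) (t : F), (ht a < ht g)%R ->
                x g t \in Vset x a /\ lam (x g t) = 1%R]].
Proof.
case: HU => xadd Umem inj xcomm.
case/and4P: (allchecksP a) => Hcl HcSl HcSa Hht.
have cSl := condbP HcSl. have cSa := condbP HcSa.
have Sla : Slg a a by rewrite /Slg ltn_ord /legn eqxx !andbF.
have SaE : forall i, Sal a i = Slg a i && (i != a) by [].
have VE : Vset x a = Tk x (Slg a) 12.
  apply/setP => g; apply/idP/idP.
    case/imsetP => d; rewrite inE => /forall_inP Hd ->.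
    apply/(Tk_prodx xadd); exists d; split => // i.
    by rewrite /Slg ltn_ord /= negbK -legE => /Hd /eqP.
  case/(Tk_prodx xadd) => d [Hd ->]; apply/imsetP; exists d => //.
  rewrite inE; apply/forall_inP => i Hi.
  by rewrite Hd // /Slg ltn_ord /= negbK -legE.
have [gV memV _] := Tk_props xadd xcomm cSl (fun i _ H => H) (leqnn 12).
have phi0 : phi 0%R = 1%R.
  have := phi_add 0%R 0%R; rewrite addr0 -{1}[phi 0%R]mulr1 => /mulfI -> //.
split.
- exact: closedP.
- apply/andP; split; last by rewrite VE.
  by apply/subsetP => g /imsetP [d _ ->]; apply/Umem; exists d.
- rewrite VE; apply/eqP; rewrite eqEsubset; apply/andP; split.
    apply/subsetP => z /setIP [/imsetP [t _ ->] Hc].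
    have := subsetP (comm_sub_Y xadd xcomm inj cSl cSa Sla SaE) _ Hc.
    rewrite -{1}[a]inord_val -/(y x a t) => /(Yzero xadd inj SaE) ->.
    by rewrite x0 // set11.
  rewrite sub1set inE; apply/andP; split; last exact: group1.
  by apply/imsetP; exists 0%R; rewrite ?x0.
- move=> s Hs; exists (fun g => phi (s * coord x a g)%R); split.
  + move=> g h; rewrite VE => Hg Hh.
    by rewrite (coord_mul xadd xcomm inj cSl cSa Sla SaE Hg Hh) mulrDr phi_add.
  + by move=> g _; exact: phi_nz.
  + by move=> t; rewrite (x_delta xadd) coord_prodx // ffunE eqxx.
  + move=> g t Hgt.
    have Hg : ~~ legn a g.
      move: (allP Hht g); rewrite mem_iota ltn_ord => /(_ isT) /implyP; exact.
    have gna : a != g.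
      by apply/eqP => E; move: Hgt; rewrite E Order.POrderTheory.ltxx.
    split.
      rewrite VE -[g]inord_val; apply: memV; rewrite ?subnn ?inordK //.
      by rewrite /Slg ltn_ord.
    by rewrite (x_delta xadd) coord_prodx // ffunE (negbTE gna) mulr0 phi0.
Qed.
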